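(* Let $\nu$ be a class (ii) distribution with associated functions $f,\varphi,\Phi$, let $\theta>1$, and suppose that for all constants $\alpha\ge0$ and $s\in(0,1)$, \[\liminf_{x\to\infty}\frac{\Phi^{-1}(\varphi(x)-\alpha\log x)}{x^s}>0.\] Let $\eta$ be a distribution with density $g$ such that $\liminf_{x\to\infty}x^{t+1}g(x)>0$ for some $t\in(1,\theta)$. Then $D_{F_\Phi}(\eta|\nu)=\infty$. Moreover, the displayed condition holds whenever $\nu$ is a generalized lognormal distribution with $r>1$ and $\Phi(x)=\frac{1}{r\sigma^r}\log(x)^r$.
   Context: Densities are written $f=e^{-\varphi}$. For strictly convex $F$ with $F(1)=0$, $D_F(\eta|\nu)=\int_0^\infty F(g/f)f\,dx$ if $\eta\ll\nu$ and $+\infty$ otherwise. Class (ii): $\lim_{x\to\infty}\varphi(x)/x=0$, $\lim_{x\to\infty}\varphi(x)/\log x=\infty$, and there exist $\bar x>0$ and $\Phi:\mathbb R_+\to\mathbb R$ positive, strictly concave, twice differentiable and increasing on $[\bar x,\infty)$ such that, with $\Phi^{-1}$ the inverse of $\Phi|_{[\bar x,\infty)}$, $0<\liminf_{x\to\infty}\Phi^{-1}(\varphi(x))/x\le\limsup_{x\to\infty}\Phi^{-1}(\varphi(x))/x<\infty$. With $\bar y=\exp(\Phi(\bar x))$: $F_\Phi(y)=y\log y$ for $y\le\bar y$ and $F_\Phi(y)=a\,y\,\Phi^{-1}(\log y)^\theta+b$ for $y>\bar y$, where $a=\frac{1+\log\bar y}{\Phi^{-1}(\log\bar y)^\theta+\theta\Phi^{-1}(\log\bar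 y)^{\theta-1}(\Phi^{-1})'(\log\bar y)}$, $b=\bar y\log\bar y-a\bar y\Phi^{-1}(\log\bar y)^\theta$. The generalized lognormal density is $f(x)=\frac{1}{Zx}\exp(-\frac{1}{r\sigma^r}|\log x-\mu|^r)$, $x>0$, with $Z=2r^{1/r}\sigma\Gamma(1+1/r)$, $r>1$, $\sigma>0$, $\mu\in\mathbb R$. *)

(* Defs.v *)
From Stdlib Require Import Reals Lra.
Open Scope R_scope.

(* real power x^p for x >= 0, with the convention 0^p = 0 (p > 0) *)
Definition rpow (x p : R) : R :=
  if Req_EM_T x 0 then 0 else Rpower x p.

Definition liminf_pos (h : R -> R) : Prop :=
  exists c, 0 < c /\ exists X, forall x, X <= x -> c <= h x.

Definition limsup_finite (h : R -> R) : Prop :=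
  exists C X, forall x, X <= x -> h x <= C.

Definition lim_infty_zero (h : R -> R) : Prop :=
  forall eps, 0 < eps -> exists X, forall x, X <= x -> Rabs (h x) < eps.

Definition lim_infty_infty (h : R -> R) : Prop :=
  forall M, exists X, forall x, X <= x -> M < h x.

(* Class (ii) assumptions on phi, with the auxiliary Phi (on [xbar,oo)),
   its inverse Phiinv on Phi([xbar,oo)) = [Phi xbar, oo), and the one-sided
   derivative dPi of Phiinv at Phi xbar = log ybar. *)
Definition class_ii (phi Phi Phiinv : R -> R) (xbar dPi : R) : Prop :=
  lim_infty_zero (fun x => phi x / x) /\
  lim_infty_infty (fun x => phi x / ln x) /\
  0 < xbar /\
  (forall x, xbar <= x -> 0 < Phi x) /\
  (forall x y, xbar <= x -> x < y -> Phi x < Phi y) /\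
  (forall x y l, xbar <= x -> x < y -> 0 < l < 1 ->
       l * Phi x + (1 - l) * Phi y < Phi (l * x + (1 - l) * y)) /\
  (exists dPhi d2Phi : R -> R,
       (forall x, xbar <= x -> derivable_pt_lim Phi x (dPhi x)) /\
       (forall x, xbar < x -> derivable_pt_lim dPhi x (d2Phi x))) /\
  (forall y, Phi xbar <= y -> xbar <= Phiinv y /\ Phi (Phiinv y) = y) /\
  (forall eps, 0 < eps -> exists delta, 0 < delta /\ forall h, 0 < h < delta ->
       Rabs ((Phiinv (Phi xbar + h) - Phiinv (Phi xbar)) / h - dPi) < eps) /\
  liminf_pos (fun x => Phiinv (phi x) / x) /\
  limsup_finite (fun x => Phiinv (phi x) / x).

Definition FPhi (Phi Phiinv : R -> R) (xbar dPi theta : R) (y : R) : R :=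
  let ybar := exp (Phi xbar) in
  let p0 := Phiinv (ln ybar) in
  let a := (1 + ln ybar) /
           (rpow p0 theta + theta * rpow p0 (theta - 1) * dPi) in
  let b := ybar * ln ybar - a * ybar * rpow p0 theta in
  if Rle_dec y ybar then y * ln y
  else a * y * rpow (Phiinv (ln y)) theta + b.

(* D_F(eta|nu) = +oo, for densities g (of eta) and f > 0 (of nu) on (0,oo):
   the integrand F(g/f) f admits step-function minorants on compact
   subintervals of (0,oo) with arbitrarily large integral. *)
Definition divergence_infinite (F g f : R -> R) : Prop :=
  forall M, exists a b, 0 < a /\ a <= b /\
    exists psi : StepFun a b,
      (forall x, a <= x <= b -> psi x <= F (g x / f x) * f x) /\
      M <= RiemannInt_SF psi.

(* Main.v *)
Require Import Defs.
From Stdlib Require Import Reals Lra.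
Open Scope R_scope.

Lemma absle (x a : R) : Rabs x <= a -> -a <= x <= a.
Proof. intros H. pose proof (Rle_abs x). pose proof (Rle_abs (-x)). rewrite Rabs_Ropp in *. lra. Qed.
Lemma abslt (x a : R) : Rabs x < a -> -a < x < a.
Proof. intros H. pose proof (Rle_abs x). pose proof (Rle_abs (-x)). rewrite Rabs_Ropp in *. lra. Qed.

Lemma step_below (h : R -> R) (a b : R) (pr : Riemann_integrable h a b) :
  a <= b -> exists psi : StepFun a b,
    (forall x, a <= x <= b -> psi x <= h x) /\ RiemannInt pr - 2 <= RiemannInt_SF psi.
Proof.
  intros Hab.
  unfold RiemannInt. destruct (RiemannInt_exists pr RinvN RinvN_cv) as [l Hl].
  destruct (Hl 1 Rlt_0_1) as [N HN].
  specialize (HN N (Nat.le_refl N)). unfold Rdist in HN.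
  destruct (phi_sequence_prop RinvN pr N) as [psi [Hp1 Hp2]].
  set (phi := phi_sequence RinvN pr N) in *.
  exists (mkStepFun (StepFun_P28 (-1) phi psi)).
  split.
  - intros x Hx. simpl. 
    assert (Rmin a b <= x <= Rmax a b) as Hx'.
    { rewrite Rmin_left, Rmax_right by lra. lra. }
    specialize (Hp1 x Hx'). apply absle in Hp1. lra.
  - rewrite StepFun_P30.
    assert (RinvN N <= 1).
    { unfold RinvN; simpl. assert (1 <= INR N + 1) by (pose proof (pos_INR N); lra).
      rewrite <- Rinv_1. apply Rinv_le_contravar; lra. }
    apply abslt in Hp2. apply abslt in HN. lra.
Qed.

Lemma cont_inv (K x : R) : 0 < x -> continuity_pt (fun y => K / y) x.
Proof.
  intros Hx.
  change (continuity_pt (fct_cte K / id)%F x).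
  apply continuity_pt_div.
  - apply continuity_pt_const. intros u v; reflexivity.
  - apply derivable_continuous_pt, derivable_pt_id.
  - unfold id; lra.
Qed.

Lemma int_inv_aux (K X : R) : 0 < K -> 0 < X -> forall n : nat,
  forall pr : Riemann_integrable (fun y => K / y) X (X * 2 ^ n),
  INR n * (K / 2) <= RiemannInt pr.
Proof.
  intros HK HX n. induction n as [|n IH]; intros pr.
  - simpl.
    assert (H : 0 * (X * 1 - X) <= RiemannInt pr <= K / X * (X * 1 - X)).
    { apply RiemannInt_const_bound. lra. intros x Hx. lra. }
    destruct H as [H _]. rewrite Rmult_0_l in H. rewrite Rmult_0_l. exact H.
  - assert (Hp : 0 < 2 ^ n) by (apply pow_lt; lra).
    assert (HXn : 0 < X * 2 ^ n) by (apply Rmult_lt_0_compat; lra).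
    assert (E : X * 2 ^ S n = 2 * (X * 2 ^ n)) by (simpl; ring).
    assert (pr1 : Riemann_integrable (fun y => K / y) X (X * 2 ^ n)).
    { apply continuity_implies_RiemannInt.
      - assert (1 <= 2 ^ n) by (apply pow_R1_Rle; lra). nra.
      - intros x Hx. apply cont_inv; lra. }
    assert (pr2 : Riemann_integrable (fun y => K / y) (X * 2 ^ n) (X * 2 ^ S n)).
    { apply continuity_implies_RiemannInt.
      - lra.
      - intros x Hx. apply cont_inv; lra. }
    assert (1 <= 2 ^ n) by (apply pow_R1_Rle; lra).
    rewrite <- (RiemannInt_P25 pr1 pr2 pr) by nra.
    specialize (IH pr1).
    assert (K / (X * 2 ^ S n) * (X * 2 ^ S n - X * 2 ^ n) <= RiemannInt pr2).
    { refine (proj1 (@RiemannInt_const_bound _ _ _ _ (K / (X * 2 ^ n)) pr2 _ _)). lra.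
      intros x Hx. split; unfold Rdiv; apply Rmult_le_compat_l; try lra;
      apply Rinv_le_contravar; lra. }
    assert (E2 : K / (X * 2 ^ S n) * (X * 2 ^ S n - X * 2 ^ n) = K / 2)
      by (rewrite E; field; lra).
    rewrite S_INR. lra.
Qed.

Lemma int_inv_large (K X M : R) : 0 < K -> 0 < X -> exists Y, X <= Y /\
  exists pr : Riemann_integrable (fun y => K / y) X Y, M <= RiemannInt pr.
Proof.
  intros HK HX.
  destruct (INR_archimed (K/2) M) as [n Hn]. lra.
  assert (1 <= 2 ^ n) by (apply pow_R1_Rle; lra).
  exists (X * 2 ^ n). split. nra.
  assert (pr : Riemann_integrable (fun y => K / y) X (X * 2 ^ n)).
  { apply continuity_implies_RiemannInt. nra. intros x Hx. apply cont_inv; lra. }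
  exists pr. pose proof (int_inv_aux K X HK HX n pr). lra.
Qed.

Lemma div_from_lower (F g f : R -> R) (K X0 : R) : 0 < K -> 0 < X0 ->
  (forall x, X0 <= x -> K / x <= F (g x / f x) * f x) -> divergence_infinite F g f.
Proof.
  intros HK HX H M.
  destruct (int_inv_large K X0 (M + 2) HK HX) as [Y [HY [pr Hpr]]].
  destruct (step_below _ _ _ pr HY) as [psi [Hpsi Hint]].
  exists X0, Y. split. lra. split. lra. exists psi. split.
  - intros x Hx. eapply Rle_trans. apply Hpsi, Hx. apply H. lra.
  - lra.
Qed.

Lemma rpow_exp (x p : R) : 0 < x -> rpow x p = exp (p * ln x).
Proof. intros H. unfold rpow. destruct (Req_EM_T x 0). lra. reflexivity. Qed.

Lemma ln_le' (x y : R) : 0 < x -> x <= y -> ln x <= ln y.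
Proof. intros H1 H2. destruct H2. left; apply ln_increasing; lra. subst; lra. Qed.

Lemma exp_le' (x y : R) : x <= y -> exp x <= exp y.
Proof. intros H. destruct H. left; apply exp_increasing; lra. subst; lra. Qed.

Lemma inv_mono (Phi Phiinv : R -> R) (xbar : R) :
  (forall x y, xbar <= x -> x < y -> Phi x < Phi y) ->
  (forall y, Phi xbar <= y -> xbar <= Phiinv y /\ Phi (Phiinv y) = y) ->
  forall y1 y2, Phi xbar <= y1 -> y1 <= y2 -> Phiinv y1 <= Phiinv y2.
Proof.
  intros Hinc Hinv y1 y2 H1 H2.
  destruct (Hinv y1 H1) as [A1 B1]. destruct (Hinv y2 ltac:(lra)) as [A2 B2].
  destruct (Rle_or_lt (Phiinv y1) (Phiinv y2)) as [h|h]. exact h.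
  specialize (Hinc _ _ A2 h). lra.
Qed.

Lemma part1 (phi Phi Phiinv g : R -> R) (xbar dPi theta t : R) :
      class_ii phi Phi Phiinv xbar dPi ->
      1 < theta ->
      (forall alpha s, 0 <= alpha -> 0 < s < 1 ->
         liminf_pos (fun x => Phiinv (phi x - alpha * ln x) / rpow x s)) ->
      (forall x, 0 < x -> 0 <= g x) ->
      1 < t < theta ->
      liminf_pos (fun x => rpow x (t + 1) * g x) ->
      divergence_infinite (FPhi Phi Phiinv xbar dPi theta) g
                          (fun x => exp (- phi x)).
Proof.
  intros HC Hth Hyp Hg0 Ht Hg.
  destruct HC as [_ [H2 [Hxb [HPpos [HPinc [_ [_ [HPinv [HdPi [_ _]]]]]]]]]].
  pose proof (inv_mono Phi Phiinv xbar HPinc HPinv) as Hmono.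
  set (P0 := Phi xbar).
  assert (HP0 : 0 < P0) by (apply HPpos; lra).
  assert (HdPi0 : 0 <= dPi).
  { destruct (Rle_or_lt 0 dPi) as [h|h]. exact h. exfalso.
    destruct (HdPi (- dPi) ltac:(lra)) as [d [Hd Hq]].
    specialize (Hq (d/2) ltac:(lra)).
    assert (0 <= Phiinv (Phi xbar + d / 2) - Phiinv (Phi xbar)).
    { assert (Phiinv (Phi xbar) <= Phiinv (Phi xbar + d / 2)) by (apply Hmono; lra). lra. }
    assert (0 <= (Phiinv (Phi xbar + d / 2) - Phiinv (Phi xbar)) / (d / 2)).
    { unfold Rdiv. apply Rmult_le_pos. lra. left; apply Rinv_0_lt_compat; lra. }
    apply abslt in Hq. lra. }
  set (p0 := Phiinv P0).
  assert (Hp0 : 0 < p0). { destruct (HPinv P0 ltac:(unfold P0; lra)). unfold p0. lra. }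
  set (a := (1 + P0) / (rpow p0 theta + theta * rpow p0 (theta - 1) * dPi)).
  assert (Ha : 0 < a).
  { unfold a. rewrite !rpow_exp by lra. apply Rdiv_lt_0_compat. lra.
    pose proof (exp_pos (theta * ln p0)). pose proof (exp_pos ((theta - 1) * ln p0)).
    assert (0 <= theta * exp ((theta - 1) * ln p0) * dPi).
    { apply Rmult_le_pos. apply Rmult_le_pos; lra. lra. }
    lra. }
  set (b := exp P0 * P0 - a * exp P0 * rpow p0 theta).
  destruct Hg as [c [Hc [Xg HXg]]].
  set (s := (t / theta + 1) / 2).
  assert (Hts : 0 < t / theta < 1).
  { split. apply Rdiv_lt_0_compat; lra. apply (Rmult_lt_reg_r theta). lra.
    unfold Rdiv. rewrite Rmult_assoc, Rinv_l by lra. lra. }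
  assert (Hs : 0 < s < 1) by (unfold s; lra).
  assert (Hsth : t <= s * theta).
  { unfold s. replace ((t / theta + 1) / 2 * theta) with ((t + theta) / 2) by (field; lra). lra. }
  destruct (Hyp (t + 2) s ltac:(lra) Hs) as [c' [Hc' [X1 HX1]]].
  destruct (H2 (t + 4)) as [X2 HX2].
  set (A := a * c * exp (theta * ln c')).
  assert (HA : 0 < A) by (unfold A; pose proof (exp_pos (theta * ln c')); 
     apply Rmult_lt_0_compat; [apply Rmult_lt_0_compat|]; lra).
  set (X0 := Rmax (Rmax (Rmax Xg X1) (Rmax X2 2))
                  (Rmax (Rmax (exp P0 + 1) (exp (Rabs (ln c)) + 1)) (2 * Rabs b / A + 1))).
  apply (div_from_lower _ _ _ (A / 2) X0). lra.
  { unfold X0. eapply Rlt_le_trans with 2. lra.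
    eapply Rle_trans; [|apply Rmax_l]. eapply Rle_trans; [|apply Rmax_r]. apply Rmax_r. }
  intros x Hx.
  assert (HXg' : Xg <= x).
  { eapply Rle_trans; [|exact Hx]. unfold X0.
    eapply Rle_trans; [|apply Rmax_l]. eapply Rle_trans; [|apply Rmax_l]. apply Rmax_l. }
  assert (HX1' : X1 <= x).
  { eapply Rle_trans; [|exact Hx]. unfold X0.
    eapply Rle_trans; [|apply Rmax_l]. eapply Rle_trans; [|apply Rmax_l]. apply Rmax_r. }
  assert (HX2' : X2 <= x).
  { eapply Rle_trans; [|exact Hx]. unfold X0.
    eapply Rle_trans; [|apply Rmax_l]. eapply Rle_trans; [|apply Rmax_r]. apply Rmax_l. }
  assert (Hx2 : 2 <= x).
  { eapply Rle_trans; [|exact Hx]. unfold X0.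
    eapply Rle_trans; [|apply Rmax_l]. eapply Rle_trans; [|apply Rmax_r]. apply Rmax_r. }
  assert (HxP : exp P0 + 1 <= x).
  { eapply Rle_trans; [|exact Hx]. unfold X0.
    eapply Rle_trans; [|apply Rmax_r]. eapply Rle_trans; [|apply Rmax_l]. apply Rmax_l. }
  assert (Hxc : exp (Rabs (ln c)) + 1 <= x).
  { eapply Rle_trans; [|exact Hx]. unfold X0.
    eapply Rle_trans; [|apply Rmax_r]. eapply Rle_trans; [|apply Rmax_l]. apply Rmax_r. }
  assert (Hxb' : 2 * Rabs b / A + 1 <= x).
  { eapply Rle_trans; [|exact Hx]. unfold X0.
    eapply Rle_trans; [|apply Rmax_r]. apply Rmax_r. }
  clear Hx.
  assert (Hxpos : 0 < x) by lra.
  set (lx := ln x).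
  assert (Hlx : 0 < lx).
  { unfold lx. rewrite <- ln_1. apply ln_increasing; lra. }
  assert (Hexlx : exp lx = x) by (apply exp_ln; lra).
  specialize (HXg x HXg'). rewrite rpow_exp in HXg by lra. fold lx in HXg.
  assert (Hgx : c * exp (- ((t + 1) * lx)) <= g x).
  { rewrite exp_Ropp. pose proof (exp_pos ((t + 1) * lx)).
    apply (Rmult_le_reg_l (exp ((t + 1) * lx))). lra.
    rewrite <- Rmult_assoc, (Rmult_comm _ c), Rmult_assoc, Rinv_r by lra. lra. }
  assert (Hgpos : 0 < g x).
  { eapply Rlt_le_trans; [|exact Hgx]. apply Rmult_lt_0_compat. lra. apply exp_pos. }
  assert (Hlng : ln c - (t + 1) * lx <= ln (g x)).
  { eapply Rle_trans; [|apply ln_le'; [|exact Hgx]].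
    rewrite ln_mult, ln_exp by (try apply exp_pos; lra). lra.
    apply Rmult_lt_0_compat. lra. apply exp_pos. }
  specialize (HX2 x HX2').
  assert (Hphi : (t + 4) * lx < phi x).
  { apply (Rmult_lt_compat_r lx) in HX2; [|lra].
    unfold Rdiv in HX2. rewrite Rmult_assoc, Rinv_l in HX2 by lra. lra. }
  assert (HlxP : P0 < lx).
  { unfold lx. rewrite <- (ln_exp P0). apply ln_increasing. apply exp_pos. lra. }
  assert (Hlxc : Rabs (ln c) < lx).
  { unfold lx. rewrite <- (ln_exp (Rabs (ln c))). apply ln_increasing. apply exp_pos. lra. }
  pose proof (Rle_abs (- ln c)) as Hac. rewrite Rabs_Ropp in Hac.
  set (y := g x / exp (- phi x)).
  assert (Hlny : ln y = ln (g x) + phi x).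
  { unfold y, Rdiv. rewrite ln_mult, ln_Rinv, ln_exp. ring.
    apply exp_pos. lra. apply Rinv_0_lt_compat, exp_pos. }
  set (u := phi x - (t + 2) * lx).
  assert (Hu1 : u <= ln y) by (unfold u; fold lx; lra).
  assert (Hu2 : P0 < u) by (unfold u; fold lx; nra).
  assert (Hy : exp P0 < y).
  { assert (0 < y) by (unfold y; apply Rdiv_lt_0_compat; [lra|apply exp_pos]).
    rewrite <- (exp_ln y) by lra. apply exp_increasing. lra. }
  specialize (HX1 x HX1'). rewrite rpow_exp in HX1 by lra. fold lx u in HX1.
  assert (HQ : c' * exp (s * lx) <= Phiinv (ln y)).
  { eapply Rle_trans; [|apply (Hmono u); [unfold P0 in Hu2; lra| exact Hu1]].
    pose proof (exp_pos (s * lx)).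
    apply (Rmult_le_compat_r (exp (s * lx))) in HX1; [|lra].
    unfold Rdiv in HX1. rewrite Rmult_assoc, Rinv_l in HX1 by lra. lra. }
  set (Q := Phiinv (ln y)) in *.
  assert (HQpos : 0 < Q).
  { eapply Rlt_le_trans; [|exact HQ]. apply Rmult_lt_0_compat. lra. apply exp_pos. }
  assert (HRQ : exp (theta * ln c' + theta * s * lx) <= rpow Q theta).
  { rewrite rpow_exp by lra. apply exp_le'.
    replace (theta * ln c' + theta * s * lx) with (theta * ln (c' * exp (s * lx))).
    apply Rmult_le_compat_l. lra. apply ln_le'. apply Rmult_lt_0_compat. lra. apply exp_pos. exact HQ.
    rewrite ln_mult, ln_exp. ring. lra. apply exp_pos. }
  unfold FPhi. cbv zeta. rewrite ln_exp. fold P0 p0 a b y.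
  destruct (Rle_dec y (exp P0)) as [hy|hy]. lra.
  fold Q.
  assert (Hyf : y * exp (- phi x) = g x).
  { unfold y, Rdiv. rewrite Rmult_assoc, Rinv_l. ring. pose proof (exp_pos (- phi x)); lra. }
  replace ((a * y * rpow Q theta + b) * exp (- phi x))
    with (a * g x * rpow Q theta + b * exp (- phi x)) by (rewrite <- Hyf; ring).
  assert (Hmain : A / x <= a * g x * rpow Q theta).
  { apply Rle_trans with (a * (c * exp (- ((t + 1) * lx))) * exp (theta * ln c' + theta * s * lx)).
    - replace (a * (c * exp (- ((t + 1) * lx))) * exp (theta * ln c' + theta * s * lx))
        with (A * exp ((theta * s - t - 1) * lx)).
      + rewrite <- Hexlx at 1. unfold Rdiv. rewrite <- exp_Ropp.
        apply Rmult_le_compat_l. lra. apply exp_le'. nra.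
      + replace ((theta * s - t - 1) * lx) with (- ((t + 1) * lx) + (theta * ln c' + theta * s * lx) + - (theta * ln c')) by ring.
        rewrite !exp_plus, (exp_Ropp (theta * ln c')). unfold A.
        pose proof (exp_pos (theta * ln c')). field. lra.
    - apply Rmult_le_compat. 
      + apply Rmult_le_pos. lra. apply Rmult_le_pos. lra. left; apply exp_pos.
      + left; apply exp_pos.
      + apply Rmult_le_compat_l. lra. exact Hgx.
      + exact HRQ. }
  assert (Hsec : - (A / 2) / x <= b * exp (- phi x)).
  { assert (Hef : exp (- phi x) <= / x * / x).
    { replace (/ x * / x) with (exp (- lx) * exp (- lx)) by (rewrite exp_Ropp, Hexlx; ring).
      rewrite <- exp_plus. apply exp_le'. nra. }
    pose proof (exp_pos (- phi x)).
    assert (Rabs b * exp (- phi x) <= (A / 2) / x).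
    { apply Rle_trans with (Rabs b * (/ x * / x)).
      apply Rmult_le_compat_l. apply Rabs_pos. exact Hef.
      assert (Rabs b <= A / 2 * x).
      { assert (2 * Rabs b / A <= x) by lra.
        apply (Rmult_le_compat_r (A / 2)) in H0; [|lra].
        replace (2 * Rabs b / A * (A / 2)) with (Rabs b) in H0 by (field; lra). lra. }
      apply (Rmult_le_compat_r (/ x * / x)) in H0.
      replace (A / 2 * x * (/ x * / x)) with (A / 2 / x) in H0 by (field; lra). exact H0.
      pose proof (Rinv_0_lt_compat x Hxpos). nra. }
    pose proof (Rle_abs (- b)). rewrite Rabs_Ropp in H1.
    replace (- (A / 2) / x) with (- (A / 2 / x)) by (field; lra). nra. }
  replace (A / 2 / x) with (A / x + - (A / 2) / x) by (field; lra). lra.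
Qed.

Lemma ln_nonpos (x : R) : x <= 0 -> ln x = 0.
Proof. intros H. unfold ln. case (Rlt_dec 0 x); intros h. exfalso. apply (Rlt_irrefl 0). apply (Rlt_le_trans _ _ _ h H). reflexivity. Qed.

Lemma rpow_nonpos_le1 (x r : R) : x <= 0 -> rpow x r <= 1.
Proof.
  intros H. unfold rpow. destruct (Req_EM_T x 0). lra.
  unfold Rpower. rewrite ln_nonpos by lra. rewrite Rmult_0_r, exp_0. lra.
Qed.

Lemma part2 :
  (forall (r sigma mu Z xbar : R) (Phiinv : R -> R),
      1 < r -> 0 < sigma -> 0 < Z -> 0 < xbar ->
      let f := fun x => / (Z * x) *
                 exp (- (/ (r * rpow sigma r)) * rpow (Rabs (ln x - mu)) r) in
      let phi := fun x => - ln (f x) in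
      let Phi := fun x => / (r * rpow sigma r) * rpow (ln x) r in
      (forall y, Phi xbar <= y -> xbar <= Phiinv y /\ Phi (Phiinv y) = y) ->
      forall alpha s, 0 <= alpha -> 0 < s < 1 ->
        liminf_pos (fun x => Phiinv (phi x - alpha * ln x) / rpow x s)).
Proof.
  intros r sigma mu Z xbar Phiinv Hr Hsig HZ Hxb. cbv zeta.
  intros HPinv alpha s Ha Hs.
  set (k := / (r * rpow sigma r)) in *.
  assert (Hk : 0 < k).
  { unfold k. apply Rinv_0_lt_compat, Rmult_lt_0_compat. lra.
    rewrite rpow_exp by lra. apply exp_pos. }
  set (PX := k * rpow (ln xbar) r) in *.
  set (s2 := (1 + s) / 2).
  assert (Hs2 : s < s2 < 1) by (unfold s2; lra).
  set (q := exp (r * ln s2) - exp (r * ln s)).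
  assert (Hq : 0 < q).
  { unfold q. assert (exp (r * ln s) < exp (r * ln s2)); [|lra].
    apply exp_increasing. apply Rmult_lt_compat_l. lra. apply ln_increasing; lra. }
  set (C1 := k + Rabs PX + 1 + Rabs (ln Z)).
  set (L := (C1 + Rabs (alpha - 1)) / (k * q)).
  assert (HL : 0 < L).
  { unfold L. apply Rdiv_lt_0_compat. pose proof (Rabs_pos (alpha - 1)).
    pose proof (Rabs_pos PX). pose proof (Rabs_pos (ln Z)). unfold C1. lra.
    apply Rmult_lt_0_compat; lra. }
  set (V := Rmax (Rmax (Rabs mu / (1 - s2) + 1) 1) (exp (ln L / (r - 1)))).
  exists 1. split. lra. exists (exp V). intros x Hx.
  assert (Hxpos : 0 < x) by (pose proof (exp_pos V); lra).
  set (v := ln x).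
  assert (HvV : V <= v) by (unfold v; rewrite <- (ln_exp V); apply ln_le'; [apply exp_pos|exact Hx]).
  assert (Hv1 : 1 <= v).
  { eapply Rle_trans; [|exact HvV]. unfold V. eapply Rle_trans; [|apply Rmax_l]. apply Rmax_r. }
  assert (Hvmu : Rabs mu / (1 - s2) + 1 <= v).
  { eapply Rle_trans; [|exact HvV]. unfold V. eapply Rle_trans; [|apply Rmax_l]. apply Rmax_l. }
  assert (HvL : exp (ln L / (r - 1)) <= v).
  { eapply Rle_trans; [|exact HvV]. unfold V. apply Rmax_r. }
  clear Hx HvV.
  assert (Hmu2 : s2 * v < v - mu).
  { assert (Rabs mu < (1 - s2) * v).
    { apply (Rmult_le_compat_l (1 - s2)) in Hvmu; [|lra].
      replace ((1 - s2) * (Rabs mu / (1 - s2) + 1)) with (Rabs mu + (1 - s2)) in Hvmu by (field; lra).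
      lra. }
    pose proof (Rle_abs mu). lra. }
  assert (Habs : Rabs (v - mu) = v - mu).
  { apply Rabs_right. nra. }
  set (E := exp (r * ln v)).
  assert (HE : v * L <= E).
  { unfold E. replace (r * ln v) with (ln v + (r - 1) * ln v) by ring.
    rewrite exp_plus, exp_ln by lra. apply Rmult_le_compat_l. lra.
    rewrite <- (exp_ln L) at 1 by lra. apply exp_le'.
    replace (ln L) with ((r - 1) * (ln L / (r - 1))) by (field; lra).
    apply Rmult_le_compat_l. lra. rewrite <- (ln_exp (ln L / (r - 1))).
    apply ln_le'. apply exp_pos. exact HvL. }
  set (R0 := rpow (Rabs (v - mu)) r).
  assert (HR0 : exp (r * ln s2) * E <= R0).
  { unfold R0. rewrite Habs. rewrite rpow_exp by nra. unfold E.
    rewrite <- exp_plus. apply exp_le'. rewrite <- Rmult_plus_distr_l.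
    apply Rmult_le_compat_l. lra. rewrite <- ln_mult by lra. apply ln_le'. nra. lra. }
  assert (Hphi : - ln (/ (Z * x) * exp (- k * R0)) = ln Z + v + k * R0).
  { rewrite ln_mult, ln_Rinv, ln_mult, ln_exp. fold v. ring. lra. lra.
    apply Rmult_lt_0_compat; lra. apply Rinv_0_lt_compat, Rmult_lt_0_compat; lra. apply exp_pos. }
  rewrite Hphi.
  set (T3 := exp (r * ln (s * v))).
  assert (HT3 : T3 = exp (r * ln s) * E).
  { unfold T3, E. rewrite <- exp_plus, <- Rmult_plus_distr_l, ln_mult by lra. reflexivity. }
  assert (HT3pos : 0 < T3) by apply exp_pos.
  set (y := ln Z + v + k * R0 - alpha * v).
  assert (Hy : k + Rabs PX + 1 + k * T3 <= y).
  { assert (k * q * E >= C1 + (alpha - 1) * v).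
    { apply Rle_ge. apply Rle_trans with (k * q * (v * L)).
      - replace (k * q * (v * L)) with ((C1 + Rabs (alpha - 1)) * v) by (unfold L; field; nra).
        pose proof (Rle_abs (alpha - 1)). assert (0 <= C1).
        { pose proof (Rabs_pos PX). pose proof (Rabs_pos (ln Z)). unfold C1. lra. }
        nra.
      - apply Rmult_le_compat_l. nra. exact HE. }
    assert (k * (exp (r * ln s2) * E) <= k * R0) by (apply Rmult_le_compat_l; lra).
    unfold q in H. rewrite HT3. unfold y.
    pose proof (Rle_abs (- ln Z)). rewrite Rabs_Ropp in H1. unfold C1 in H. nra. }
  assert (HPy : PX <= y) by (pose proof (Rle_abs PX); pose proof (Rmult_le_pos k T3); nra).
  destruct (HPinv y HPy) as [HP1 HP2]. set (P := Phiinv y) in *.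
  assert (HlnP : s * v <= ln P).
  { destruct (Rle_or_lt (s * v) (ln P)) as [h|h]. exact h. exfalso.
    destruct (Rle_or_lt (ln P) 0) as [h0|h0].
    - pose proof (rpow_nonpos_le1 (ln P) r h0).
      assert (k * rpow (ln P) r <= k * 1) by (apply Rmult_le_compat_l; lra).
      pose proof (Rabs_pos PX). nra.
    - rewrite rpow_exp in HP2 by lra.
      assert (exp (r * ln (ln P)) < T3).
      { unfold T3. apply exp_increasing. apply Rmult_lt_compat_l. lra.
        apply ln_increasing; lra. }
      assert (k * exp (r * ln (ln P)) < k * T3) by (apply Rmult_lt_compat_l; lra).
      pose proof (Rabs_pos PX). nra. }
  rewrite rpow_exp by lra. fold v.
  assert (exp (s * v) <= P).
  { rewrite <- (exp_ln P) by lra. apply exp_le'. exact HlnP. }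
  pose proof (exp_pos (s * v)).
  apply (Rmult_le_reg_r (exp (s * v))). lra. unfold Rdiv.
  rewrite Rmult_assoc, Rinv_l by lra. lra.
Qed.

Theorem mainTheorem8 :
  (forall (phi Phi Phiinv g : R -> R) (xbar dPi theta t : R),
      class_ii phi Phi Phiinv xbar dPi ->
      1 < theta ->
      (forall alpha s, 0 <= alpha -> 0 < s < 1 ->
         liminf_pos (fun x => Phiinv (phi x - alpha * ln x) / rpow x s)) ->
      (forall x, 0 < x -> 0 <= g x) ->
      1 < t < theta ->
      liminf_pos (fun x => rpow x (t + 1) * g x) ->
      divergence_infinite (FPhi Phi Phiinv xbar dPi theta) g
                          (fun x => exp (- phi x)))
  /\
  (forall (r sigma mu Z xbar : R) (Phiinv : R -> R),
      1 < r -> 0 < sigma -> 0 < Z -> 0 < xbar ->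
      let f := fun x => / (Z * x) *
                 exp (- (/ (r * rpow sigma r)) * rpow (Rabs (ln x - mu)) r) in
      let phi := fun x => - ln (f x) in
      let Phi := fun x => / (r * rpow sigma r) * rpow (ln x) r in
      (forall y, Phi xbar <= y -> xbar <= Phiinv y /\ Phi (Phiinv y) = y) ->
      forall alpha s, 0 <= alpha -> 0 < s < 1 ->
        liminf_pos (fun x => Phiinv (phi x - alpha * ln x) / rpow x s)).
Proof.
  split. exact part1. exact part2.
Qed.
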